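(* Fix $\delta\in(0,1)$ and let $n_h\ge 32\,\frac{\log(4|\mathcal{X}|^2/\delta)}{(1-\gamma)^2}$. Let $\widehat P=\frac1{n_h}\sum_{i\in I_1}Z_i$ and $\widetilde P=\frac1{n_h}\sum_{i\in I_2}Z_i$ be hold-out estimates formed from two disjoint sets $I_1,I_2$ of $n_h$ i.i.d. generative transition samples each. Then for any (fixed) positive semidefinite $|\mathcal{X}|\times|\mathcal{X}|$ matrix $M$, with probability at least $1-\delta$, $$\|(I-\gamma\widehat P)^{-1}M(I-\gamma\widetilde P)^{-\top}\|_{\mathrm{diag}}\le 3\,\|(I-\gamma P)^{-1}M(I-\gamma P)^{-\top}\|_{\mathrm{diag}}.$$
   Context: Finite state space $\mathcal{X}$, discount $\gamma\in(0,1)$, row-stochastic transition matrix $P$ (row $x$ is $P(\cdot\mid x)$). A generative transition sample is a random $|\mathcal{X}|\times|\mathcal{X}|$ matrix $Z$ whose row $x$ equals $e_{x'}^\top$ with $x'\sim P(\cdot\mid x)$; samples are i.i.d. For a square matrix $A$, $\|A\|_{\mathrm{diag}}:=\max_i|A_{ii}|$. *)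

(* Defs.v *)
From HB Require Import structures.
From mathcomp Require Import all_boot all_order all_algebra.
From mathcomp Require Import reals exp.
Set Implicit Arguments. Unset Strict Implicit. Unset Printing Implicit Defensive.
Import Order.TTheory GRing.Theory Num.Theory.
Local Open Scope ring_scope.

Definition row_stochastic (R : realType) (n : nat) (P : 'M[R]_n) : Prop :=
  (forall i j, 0 <= P i j) /\ (forall i, \sum_j P i j = 1).

Definition psd (R : realType) (n : nat) (M : 'M[R]_n) : Prop :=
  M^T = M /\ forall v : 'cV[R]_n, 0 <= (v^T *m M *m v) 0 0.

Definition diagnorm (R : realType) (n : nat) (A : 'M[R]_n) : R :=
  \big[Num.max/0]_(i < n) `|A i i|.

(* One generative transition sample is encoded by the choice of next state
   f x ~ P(.|x) for every state x, independently; the matrix Z has row x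
   equal to e_{f x}^T. *)
Definition sample_mx (R : realType) (n : nat) (f : {ffun 'I_n -> 'I_n}) : 'M[R]_n :=
  \matrix_(i, j) (f i == j)%:R.

Definition sample_weight (R : realType) (n : nat) (P : 'M[R]_n)
  (f : {ffun 'I_n -> 'I_n}) : R := \prod_(x < n) P x (f x).

(* A family of N i.i.d. samples: outcome w : {ffun 'I_N -> {ffun 'I_n -> 'I_n}},
   with product probability. *)
Definition iid_weight (R : realType) (n N : nat) (P : 'M[R]_n)
  (w : {ffun 'I_N -> {ffun 'I_n -> 'I_n}}) : R :=
  \prod_(k < N) sample_weight P (w k).

Definition iid_prob (R : realType) (n N : nat) (P : 'M[R]_n)
  (E : pred {ffun 'I_N -> {ffun 'I_n -> 'I_n}}) : R :=
  \sum_(w | E w) iid_weight P w.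

Definition holdout_est (R : realType) (n N : nat) (nh : nat) (I : {set 'I_N})
  (w : {ffun 'I_N -> {ffun 'I_n -> 'I_n}}) : 'M[R]_n :=
  (nh%:R)^-1 *: \sum_(i in I) sample_mx R (w i).

(* Main.v *)
Require Import Defs.
From HB Require Import structures.
From mathcomp Require Import all_boot all_order all_algebra.
From mathcomp Require Import reals exp.
From mathcomp Require sequences.
From mathcomp Require Import ring lra.
Import Order.TTheory GRing.Theory Num.Theory.
Local Open Scope ring_scope.
Notation expR := sequences.expR.

Section Prob.
Variables (R : realType) (n N : nat) (P : 'M[R]_n).
Hypothesis P0 : forall i j, 0 <= P i j.
Hypothesis P1 : forall i, \sum_j P i j = 1.

Notation sw := (sample_weight P).
Notation iw := (@iid_weight R n N P).
Notation Om := {ffun 'I_N -> {ffun 'I_n -> 'I_n}}.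

Lemma sw_ge0 g : 0 <= sw g.
Proof. by apply: prodr_ge0 => x _; exact: P0. Qed.

Lemma iw_ge0 w : 0 <= iw w.
Proof. by apply: prodr_ge0 => k _; exact: sw_ge0. Qed.

Lemma sw_sum1 : \sum_g sw g = 1.
Proof.
rewrite /sample_weight -(bigA_distr_bigA (fun x z => P x z)).
by rewrite big1 // => x _; exact: P1.
Qed.

Lemma iw_sum1 : \sum_w iw w = 1.
Proof.
rewrite /iid_weight -(bigA_distr_bigA (fun (k : 'I_N) g => sw g)).
by rewrite big1 // => k _; exact: sw_sum1.
Qed.

Lemma sw_marg y (phi : 'I_n -> R) :
  \sum_g sw g * phi (g y) = \sum_z P y z * phi z.
Proof.
have E := @bigA_distr_bigA _ 0 1 *%R +%R _ _ (fun x z => P x z * (if x == y then phi z else 1)).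
have E2 : \prod_x \sum_z P x z * (if x == y then phi z else 1) = \sum_z P y z * phi z.
  rewrite (bigD1 y) //= [X in _ * X]big1 => [|x xy]; last first.
    by rewrite (negbTE xy); under eq_bigr do rewrite mulr1; exact: P1.
  by under eq_bigr do rewrite eqxx; rewrite mulr1.
rewrite -E2 E; apply: eq_bigr => g _.
rewrite big_split /= /sample_weight; congr (_ * _).
by rewrite -big_mkcond /= big_pred1_eq.
Qed.

Definition upd (w : Om) (k : 'I_N) (g : {ffun 'I_n -> 'I_n}) : Om :=
  [ffun i => if i == k then g else w i].

Lemma upd_same w k g : upd w k g k = g.
Proof. by rewrite ffunE eqxx. Qed.

Lemma upd_upd w k g : upd (upd w k g) k (w k) = w.
Proof. by apply/ffunP => i; rewrite !ffunE; case: eqP => // ->. Qed.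

Lemma upd_other w k g i : i != k -> upd w k g i = w i.
Proof. by rewrite ffunE => /negbTE ->. Qed.

Lemma iw_upd w k g : iw (upd w k g) * sw (w k) = iw w * sw g.
Proof.
rewrite /iid_weight (bigD1 k) // [in RHS](bigD1 k) //= upd_same.
rewrite (eq_bigr (fun i => sw (w i))); last by move=> i ik; rewrite upd_other.
ring.
Qed.

Lemma swap k (G : Om -> R) :
  \sum_w iw w * G w = \sum_w iw w * \sum_g sw g * G (upd w k g).
Proof.
under [RHS]eq_bigr do rewrite mulr_sumr.
rewrite pair_bigA /=.
pose h (pr : Om * {ffun 'I_n -> 'I_n}) := (upd pr.1 k pr.2, pr.1 k).
have hK : cancel h h.
  by case=> w g; rewrite /h /= upd_upd upd_same.
rewrite (reindex_inj (can_inj hK)) /=.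
rewrite (eq_bigr (fun pr => iw pr.1 * G pr.1 * sw pr.2)); last first.
  case=> w g _ /=; rewrite upd_upd.
  move: (iw_upd w k g) => E; rewrite mulrA E; ring.
rewrite -(pair_bigA _ (fun w g => iw w * G w * sw g)) /=; apply: eq_bigr => w _.
by rewrite -mulr_sumr sw_sum1 mulr1.
Qed.

End Prob.


Section Scal.
Variable R : realType.
Implicit Types x y : R.

Lemma expR_mul1 y : (1 - y) * expR y <= 1.
Proof.
have h := expR_ge1Dx (- y).
have e0 := expR_gt0 y.
have : expR y * expR (- y) = 1 by rewrite -expRD subrr expR0.
move=> E. rewrite -E mulrC ler_pM2l //. move: h; lra.
Qed.

Lemma expR_quad y : y <= 1/2 -> expR y <= 1 + y + 2 * y ^+ 2.
Proof.
move=> hy.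
have h := expR_mul1 y. have e0 := expR_gt0 y.
have h2 : 0 <= expR y * (y ^+ 2 * (1 - 2 * y)).
  apply: mulr_ge0; first exact: ltW.
  apply: mulr_ge0; first exact: sqr_ge0. lra.
nra.
Qed.

Lemma expR_half : expR (1/2 : R) <= 2.
Proof. have := expR_mul1 (1/2 : R). have := expR_gt0 (1/2 : R). lra. Qed.

Lemma expR_le1D x : 1 + x <= expR x.
Proof. exact: expR_ge1Dx. Qed.
End Scal.

Section QF.
Variables (R : realType) (n : nat) (C : 'M[R]_n).
Hypothesis Csym : C^T = C.
Hypothesis Cpsd : forall v : 'cV[R]_n, 0 <= (v^T *m C *m v) 0 0.

Definition bf (u v : 'cV[R]_n) : R := (u^T *m C *m v) 0 0.
Definition qf u := bf u u.
Definition Nf u := Num.sqrt (qf u).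

Lemma bfDl u v w : bf (u + v) w = bf u w + bf v w.
Proof. by rewrite /bf linearD /= !mulmxDl mxE. Qed.
Lemma bfDr u v w : bf w (u + v) = bf w u + bf w v.
Proof. by rewrite /bf !mulmxDr mxE. Qed.
Lemma bfZl a u w : bf (a *: u) w = a * bf u w.
Proof. by rewrite /bf linearZ /= -!scalemxAl mxE. Qed.
Lemma bfZr a u w : bf w (a *: u) = a * bf w u.
Proof. by rewrite /bf -!scalemxAr mxE. Qed.
Lemma bf0l w : bf 0 w = 0.
Proof. by rewrite /bf linear0 !mul0mx mxE. Qed.
Lemma bf0r w : bf w 0 = 0.
Proof. by rewrite /bf mulmx0 mxE. Qed.
Lemma bfNl u w : bf (- u) w = - bf u w.
Proof. by rewrite -scaleN1r bfZl mulN1r. Qed.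
Lemma bfNr u w : bf w (- u) = - bf w u.
Proof. by rewrite -scaleN1r bfZr mulN1r. Qed.
Lemma bfC u v : bf u v = bf v u.
Proof.
rewrite /bf.
have E (A : 'M[R]_1) : A 0 0 = A^T 0 0 by rewrite mxE.
rewrite E.
by rewrite !trmx_mul trmxK Csym mulmxA.
Qed.
Lemma bf_suml (I : finType) (P : pred I) (F : I -> 'cV[R]_n) w :
  bf (\sum_(i | P i) F i) w = \sum_(i | P i) bf (F i) w.
Proof. elim/big_rec2: _ => [|i y1 y2 _ <-]; [exact: bf0l | exact: bfDl]. Qed.
Lemma bf_sumr (I : finType) (P : pred I) (F : I -> 'cV[R]_n) w :
  bf w (\sum_(i | P i) F i) = \sum_(i | P i) bf w (F i).
Proof. elim/big_rec2: _ => [|i y1 y2 _ <-]; [exact: bf0r | exact: bfDr]. Qed.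

Lemma qf_ge0 u : 0 <= qf u.
Proof. exact: Cpsd. Qed.

Lemma qfD u v : qf (u + v) = qf u + 2 * bf u v + qf v.
Proof. rewrite /qf bfDl !bfDr (bfC v u); lra. Qed.

Lemma CS u v : bf u v ^+ 2 <= qf u * qf v.
Proof.
have H t : 0 <= qf u + 2 * t * bf u v + t ^+ 2 * qf v.
  have := qf_ge0 (u + t *: v); rewrite qfD /qf bfZr bfZl bfZr. lra.
have hu := qf_ge0 u; have hv := qf_ge0 v.
have [d0|dpos] := eqVneq (qf v) 0.
  rewrite d0 mulr0.
  have [->|b0] := eqVneq (bf u v) 0; first by rewrite expr0n.
  have := H (- (qf u + 1) / (2 * bf u v)).
  have -> : 2 * (- (qf u + 1) / (2 * bf u v)) * bf u v = - (qf u + 1).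
    by field; rewrite b0.
  rewrite d0 mulr0; lra.
have dp : 0 < qf v by rewrite lt_def dpos hv.
have := H (- bf u v / qf v).
set t := - bf u v / qf v.
have tE : t * qf v = - bf u v by rewrite /t mulrVK // unitfE.
move=> Ht.
have : 0 <= qf v * (qf u + 2 * t * bf u v + t ^+ 2 * qf v) by apply: mulr_ge0; lra.
have -> : qf v * (qf u + 2 * t * bf u v + t ^+ 2 * qf v) =
   qf u * qf v + 2 * (t * qf v) * bf u v + (t * qf v) ^+ 2 by ring.
rewrite tE. lra.
Qed.

Lemma Nf_ge0 u : 0 <= Nf u. Proof. exact: sqrtr_ge0. Qed.
Lemma Nf_sq u : Nf u ^+ 2 = qf u. Proof. by rewrite sqr_sqrtr // qf_ge0. Qed.

Lemma bf_abs u v : `|bf u v| <= Nf u * Nf v.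
Proof.
rewrite -[X in X <= _]ger0_norm ?normr_ge0 //.
have h := CS u v.
have h2 : `|bf u v| ^+ 2 <= (Nf u * Nf v) ^+ 2.
  by rewrite real_normK ?num_real // exprMn !Nf_sq.
rewrite ger0_norm //.
by move: h2; rewrite ler_pXn2r // ?nnegrE // mulr_ge0 // Nf_ge0.
Qed.

Lemma Nf_triangle u v : Nf (u + v) <= Nf u + Nf v.
Proof.
have h1 : qf (u + v) <= (Nf u + Nf v) ^+ 2.
  rewrite qfD sqrrD !Nf_sq.
  have := bf_abs u v; have := ler_norm (bf u v). lra.
rewrite -(ler_pXn2r (n := 2)) // ?nnegrE ?Nf_ge0 ?addr_ge0 ?Nf_ge0 //.
by rewrite Nf_sq.
Qed.

Lemma Nf_scale a u : Nf (a *: u) = `|a| * Nf u.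
Proof.
rewrite /Nf /qf bfZl bfZr mulrA -expr2 sqrtrM ?sqr_ge0 //.
by rewrite sqrtr_sqr.
Qed.

Lemma Nf0 : Nf 0 = 0.
Proof. by rewrite /Nf /qf bf0l sqrtr0. Qed.

Lemma Nf_sum (I : finType) (P : pred I) (F : I -> 'cV[R]_n) :
  Nf (\sum_(i | P i) F i) <= \sum_(i | P i) Nf (F i).
Proof.
elim/big_rec2: _ => [|i y u _ IH]; first by rewrite Nf0.
apply: le_trans (Nf_triangle _ _) _. lra.
Qed.

Lemma bf_delta_l i v : bf (delta_mx i 0) v = (C *m v) i 0.
Proof.
by rewrite /bf trmx_delta -mulmxA -rowE mxE.
Qed.


Lemma qf_delta i : qf (delta_mx i 0) = C i i.
Proof. by rewrite /qf bf_delta_l -colE mxE. Qed.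

Lemma vec_expand (v : 'cV[R]_n) : v = \sum_z v z 0 *: delta_mx z 0.
Proof.
rewrite {1}(matrix_sum_delta v); apply: eq_bigr => z _.
by rewrite big_ord1 (ord1 0).
Qed.

Variable c : R.
Hypothesis Cc : forall i, C i i <= c.
Hypothesis c0 : 0 <= c.
Variable p : 'cV[R]_n.
Hypothesis p0 : forall z, 0 <= p z 0.
Hypothesis p1 : \sum_z p z 0 = 1.

Definition Yv z := delta_mx z 0 - p.

Lemma Nf_delta z : Nf (delta_mx z 0) <= Num.sqrt c.
Proof. by rewrite /Nf qf_delta ler_sqrt. Qed.

Lemma Nf_p : Nf p <= Num.sqrt c.
Proof.
rewrite {1}(vec_expand p); apply: (le_trans (Nf_sum _ xpredT _)).
apply: (@le_trans _ _ (\sum_z p z 0 * Num.sqrt c)).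
  apply: ler_sum => z _; rewrite Nf_scale ger0_norm //.
  by apply: ler_wpM2l => //; exact: Nf_delta.
by rewrite -mulr_suml p1 mul1r.
Qed.

Lemma Nf_Y z : Nf (Yv z) <= 2 * Num.sqrt c.
Proof.
apply: le_trans (Nf_triangle _ _) _.
rewrite -scaleN1r Nf_scale normrN normr1 mul1r.
have := Nf_delta z; have := Nf_p; lra.
Qed.

Lemma qf_Y z : qf (Yv z) <= 4 * c.
Proof.
rewrite -Nf_sq.
have h := Nf_Y z; have h0 := Nf_ge0 (Yv z).
have -> : 4 * c = (2 * Num.sqrt c) ^+ 2 by rewrite exprMn sqr_sqrtr //; lra.
by rewrite ler_pXn2r // ?nnegrE // mulr_ge0 // sqrtr_ge0.
Qed.

Lemma bf_Y s z : bf s (Yv z) = bf (delta_mx z 0) s - bf s p.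
Proof. by rewrite /Yv bfDr bfNr bfC. Qed.

Lemma bf_s_p s : bf s p = \sum_z p z 0 * bf (delta_mx z 0) s.
Proof.
rewrite {1}(vec_expand p) bf_sumr; apply: eq_bigr => z _.
by rewrite bfZr bfC.
Qed.

Lemma mean0 s : \sum_z p z 0 * bf s (Yv z) = 0.
Proof.
under eq_bigr do rewrite bf_Y mulrBr.
by rewrite sumrB -mulr_suml p1 mul1r bf_s_p subrr.
Qed.

Lemma var_le s : \sum_z p z 0 * bf s (Yv z) ^+ 2 <= c * qf s.
Proof.
set m := bf s p.
have E : \sum_z p z 0 * bf s (Yv z) ^+ 2 =
   \sum_z p z 0 * bf (delta_mx z 0) s ^+ 2 - m ^+ 2.
  under eq_bigr do rewrite bf_Y sqrrB.
  rewrite (eq_bigr (fun z => p z 0 * bf (delta_mx z 0) s ^+ 2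
      - 2 * m * (p z 0 * bf (delta_mx z 0) s) + m ^+ 2 * p z 0)); last first.
    by move=> z _; rewrite -/m; ring.
  rewrite big_split sumrB /= -mulr_sumr -mulr_sumr p1 -bf_s_p -/m; ring.
rewrite E.
have h : \sum_z p z 0 * bf (delta_mx z 0) s ^+ 2 <= c * qf s.
  apply: (@le_trans _ _ (\sum_z p z 0 * (c * qf s))); last first.
    by rewrite -mulr_suml p1 mul1r.
  apply: ler_sum => z _; apply: ler_wpM2l => //.
  apply: le_trans (CS _ _) _; rewrite qf_delta.
  by apply: ler_wpM2r => //; exact: qf_ge0.
have := sqr_ge0 m; lra.
Qed.

Lemma mgf_step s mu : 0 <= mu ->
  (forall z, 2 * mu * `|bf s (Yv z)| <= 1/2) ->
  \sum_z p z 0 * expR (mu * qf (s + Yv z)) <=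
  expR (4 * c * mu) * expR (mu * (1 + 8 * c * mu) * qf s).
Proof.
move=> mu0 hz.
have step z : p z 0 * expR (mu * qf (s + Yv z)) <=
   expR (mu * qf s) * expR (4 * c * mu) * (p z 0 * expR (2 * mu * bf s (Yv z))).
  have h : expR (mu * qf (s + Yv z)) <=
      expR (mu * qf s + 4 * c * mu + 2 * mu * bf s (Yv z)).
    rewrite ler_expR qfD; have := qf_Y z; have := mu0; nra.
  apply: le_trans (ler_wpM2l (p0 z) h) _.
  rewrite !expRD le_eqVlt; apply/orP; left; apply/eqP; ring.
apply: le_trans (ler_sum _ (fun z _ => step z)) _.
rewrite -mulr_sumr.
have hs : \sum_z p z 0 * expR (2 * mu * bf s (Yv z)) <= expR (8 * c * mu ^+ 2 * qf s).
  apply: (@le_trans _ _ (\sum_z p z 0 * (1 + 2 * mu * bf s (Yv z)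
                          + 2 * (2 * mu * bf s (Yv z)) ^+ 2))).
    apply: ler_sum => z _; apply: ler_wpM2l => //; apply: expR_quad.
    have := hz z; have := ler_norm (bf s (Yv z)); nra.
  under eq_bigr do rewrite !mulrDr.
  rewrite !big_split /= -!mulr_suml p1.
  rewrite (eq_bigr (fun z => 2 * mu * (p z 0 * bf s (Yv z)))); last first.
    by move=> z _; ring.
  rewrite -mulr_sumr mean0 mulr0 addr0.
  rewrite (eq_bigr (fun z => 8 * mu ^+ 2 * (p z 0 * bf s (Yv z) ^+ 2))); last first.
    by move=> z _; ring.
  rewrite -mulr_sumr.
  apply: le_trans (expR_ge1Dx _).
  have := var_le s; have : 0 <= mu ^+ 2 by exact: sqr_ge0. nra.
have e1 := expR_gt0 (mu * qf s); have e2 := expR_gt0 (4 * c * mu).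
apply: le_trans (ler_wpM2l _ hs) _; first by apply: mulr_ge0; apply: ltW.
rewrite -!expRD ler_expR. nra.
Qed.


Lemma alg_step (v jr : R) : 0 <= v -> 0 <= jr -> v * (jr + 1) <= 1/2 ->
  v / 2 + (v * (1 + v) * jr / 2) / (1 - v * (1 + v) * jr) <=
  (v * (jr + 1) / 2) / (1 - v * (jr + 1)).
Proof.
move=> v0 j0 h.
set a := 1 - v * (1 + v) * jr. set b := 1 - v * (jr + 1).
have vj : v * jr <= 1/2 by nra.
have hb : 0 < b by rewrite /b; lra.
have ha : b <= a by rewrite /a /b; nra.
have hx0 : 0 <= v * (1 + v) * jr by apply: mulr_ge0 => //; apply: mulr_ge0 => //; lra.
have ha1 : a <= 1 by rewrite /a; lra.
have ha0 : 0 < a by lra.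
have E : (v * (jr + 1) / 2) / b - (v / 2 + (v * (1 + v) * jr / 2) / a) =
   ((v * (jr + 1)) * a - (v * (1 + v) * jr) * b - v * a * b) / (2 * (a * b)).
  by field; apply/andP; split; apply/lt0r_neq0.
rewrite -subr_ge0 E; apply: divr_ge0; last by nra.
have e1 : (v * (jr + 1)) * a - (v * (1 + v) * jr) * b = v * (1 - v * jr).
  by rewrite /a /b; ring.
rewrite e1.
have : a * b <= 1 - v * jr by rewrite /b; nra.
nra.
Qed.

Variables (N : nat) (P : 'M[R]_n) (y : 'I_n).
Hypothesis P0 : forall i j, 0 <= P i j.
Hypothesis P1 : forall i, \sum_j P i j = 1.
Hypothesis pE : forall z, p z 0 = P y z.

Definition Ssum (J : {set 'I_N}) (w : {ffun 'I_N -> {ffun 'I_n -> 'I_n}}) : 'cV[R]_n :=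
  \sum_(i in J) Yv (w i y).

Lemma Nf_S J w : Nf (Ssum J w) <= #|J|%:R * (2 * Num.sqrt c).
Proof.
apply: le_trans (Nf_sum _ (fun i => i \in J) _) _.
apply: le_trans (ler_sum _ (fun i _ => Nf_Y (w i y))) _.
rewrite sumr_const; set X := 2 * Num.sqrt c; by rewrite mulr_natl.
Qed.

Lemma mgf_sum j : forall J : {set 'I_N}, #|J| = j -> forall mu, 0 <= mu ->
  8 * c * mu * j%:R <= 1/2 ->
  \sum_w iid_weight P w * expR (mu * qf (Ssum J w)) <=
  expR ((8 * c * mu * j%:R / 2) / (1 - 8 * c * mu * j%:R)).
Proof.
elim: j => [|j IH] J cJ mu mu0 hmu.
  rewrite mulr0 mul0r mul0r expR0.
  have -> : J = set0 by exact: cards0_eq.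
  rewrite /Ssum. under eq_bigr do rewrite big_set0 /qf bf0l mulr0 expR0 mulr1.
  by rewrite (@iw_sum1 _ _ _ P P1).
have : (0 < #|J|)%N by rewrite cJ.
rewrite card_gt0 => /set0Pn [k kJ].
set J' := J :\ k.
have cJ' : #|J'| = j by move: (cardsD1 k J); rewrite kJ cJ add1n => -[].
have SE w : Ssum J w = Yv (w k y) + Ssum J' w by rewrite /Ssum (big_setD1 _ kJ).
have SU w g : Ssum J' (@upd n N w k g) = Ssum J' w.
  apply: eq_bigr => i; rewrite in_setD1 => /andP [ik _]; by rewrite upd_other.
rewrite (@swap _ _ _ P P1 k).
set v := 8 * c * mu.
set mu' := mu * (1 + v).
have jr0 : 0 <= j%:R :> R by exact: ler0n.
have v0 : 0 <= v by rewrite /v; apply: mulr_ge0 => //; apply: mulr_ge0 => //; lra.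
have hj1 : v * (j%:R + 1) <= 1/2 by rewrite /v natr1.
have hvj : v * j%:R <= 1/2 by nra.
have step w : iid_weight P w * \sum_g sample_weight P g * expR (mu * qf (Ssum J (@upd n N w k g)))
   <= iid_weight P w * (expR (4 * c * mu) * expR (mu' * qf (Ssum J' w))).
  apply: ler_wpM2l; first exact: (@iw_ge0 _ _ _ P P0).
  under eq_bigr do rewrite SE SU upd_same addrC.
  rewrite (@sw_marg _ _ P P1 y (fun z => expR (mu * qf (Ssum J' w + Yv z)))).
  under eq_bigr do rewrite -pE.
  rewrite /mu' /v; apply: mgf_step => // z.
  apply: le_trans (_ : 2 * mu * (4 * c * j%:R) <= _).
    apply: ler_wpM2l; first lra.
    apply: le_trans (bf_abs _ _) _.
    have h1 := Nf_S J' w; have h2 := Nf_Y z; rewrite cJ' in h1.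
    have h3 := Nf_ge0 (Ssum J' w); have h4 := Nf_ge0 (Yv z).
    have hc : (2 * Num.sqrt c) * (2 * Num.sqrt c) = 4 * c.
      by rewrite mulrACA -(expr2 (Num.sqrt c)) sqr_sqrtr //; lra.
    have hs := sqrtr_ge0 c.
    nra.
  move: hvj; rewrite /v; lra.
apply: le_trans (ler_sum _ (fun w _ => step w)) _.
under eq_bigr do rewrite mulrCA.
rewrite -mulr_sumr.
have hmu' : 8 * c * mu' * j%:R <= 1/2.
  rewrite /mu' mulrA -/v; nra.
have mu'0 : 0 <= mu' by rewrite /mu'; apply: mulr_ge0 => //; lra.
apply: le_trans (ler_wpM2l (ltW (expR_gt0 _)) (IH J' cJ' mu' mu'0 hmu')) _.
rewrite -expRD ler_expR.
have -> : 4 * c * mu = v / 2 by rewrite /v; field.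
have -> : 8 * c * mu' * j%:R = v * (1 + v) * j%:R by rewrite /mu' mulrA -/v.
rewrite -(@natr1 R j).
exact: alg_step.
Qed.

Lemma tail (J : {set 'I_N}) (t : R) : 0 < c -> (0 < #|J|)%N ->
  \sum_(w | t < qf (Ssum J w)) iid_weight P w <=
  expR (1/2) * expR (- (t / (16 * c * #|J|%:R))).
Proof.
move=> cpos Jpos.
set m := #|J|%:R : R.
have mpos : 0 < m by rewrite /m ltr0n.
set mu := 1 / (16 * c * m).
have mu0 : 0 < mu by rewrite /mu; apply: divr_gt0 => //; apply: mulr_gt0 => //; lra.
have hm : 8 * c * mu * m = 1/2 by rewrite /mu; field; apply/andP; split; apply/lt0r_neq0.
have H := @mgf_sum _ J erefl mu (ltW mu0); rewrite -/m hm in H.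
have {}H := H (lexx _).
have e : ((1/2 : R) / 2) / (1 - 1/2) = 1/2 by field.
rewrite e in H.
apply: (@le_trans _ _ (\sum_w iid_weight P w * expR (mu * qf (Ssum J w)) * expR (- (mu * t)))).
  rewrite big_mkcond /=; apply: ler_sum => w _; case: ifP => hb.
    have iw0 := @iw_ge0 _ _ _ P P0 w; rewrite -mulrA -expRD ler_peMr //.
    apply: le_trans (expR_ge1Dx _); have := ltW mu0; have := ltW hb; nra.
  by apply: mulr_ge0; [apply: mulr_ge0; [exact: (@iw_ge0 _ _ _ P P0)|]|]; apply: ltW; apply: expR_gt0.
rewrite -mulr_suml mulrC [in leRHS]mulrC.
apply: le_trans (ler_wpM2l (ltW (expR_gt0 _)) H) _.
have -> : mu * t = t / (16 * c * m) by rewrite /mu; field; apply/andP; split; apply/lt0r_neq0 => //; lra.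
by [].
Qed.

End QF.


Section Det.
Variables (R : realType) (n : nat).

Lemma bigmax_ge0 (F : 'I_n -> R) : 0 <= \big[Num.max/0]_i F i.
Proof. by elim/big_rec: _ => // i x _ h; rewrite le_max h orbT. Qed.

Lemma le_bigmaxR (F : 'I_n -> R) j : F j <= \big[Num.max/0]_i F i.
Proof. exact: le_bigmax. Qed.

Lemma bigmax_leR (F : 'I_n -> R) m : 0 <= m -> (forall i, F i <= m) ->
  \big[Num.max/0]_i F i <= m.
Proof. by move=> m0 h; apply: bigmax_le. Qed.

Variables (g : R) (Q : 'M[R]_n).
Hypothesis g0 : 0 < g.
Hypothesis g1 : g < 1.
Hypothesis Q0 : forall i j, 0 <= Q i j.
Hypothesis Q1 : forall i, \sum_j Q i j = 1.

Definition Gm := 1%:M - g *: Q.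

Lemma stoch_bound (u : 'cV[R]_n) :
  (1 - g) * \big[Num.max/0]_i `|u i 0| <= \big[Num.max/0]_i `|(Gm *m u) i 0|.
Proof.
set Mu := \big[Num.max/0]_i `|u i 0|.
set Mg := \big[Num.max/0]_i `|(Gm *m u) i 0|.
have hQ i : `|(Q *m u) i 0| <= Mu.
  rewrite mxE; apply: le_trans (ler_norm_sum _ _ _) _.
  apply: (@le_trans _ _ (\sum_j Q i j * Mu)); last by rewrite -mulr_suml Q1 mul1r.
  apply: ler_sum => j _; rewrite normrM ger0_norm //.
  by apply: ler_wpM2l => //; exact: (le_bigmaxR (fun i => `|u i 0|)).
have hG i : `|u i 0| <= Mg + g * Mu.
  have E : u i 0 = (Gm *m u) i 0 + g * (Q *m u) i 0.
    by rewrite /Gm mulmxBl mul1mx -scalemxAl !mxE; ring.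
  rewrite E; apply: le_trans (ler_normD _ _) _.
  apply: lerD; first exact: (le_bigmaxR (fun i => `|(Gm *m u) i 0|)).
  rewrite normrM (ger0_norm (ltW g0)); apply: ler_wpM2l; [exact: ltW | exact: hQ].
have : Mu <= Mg + g * Mu.
  apply: bigmax_leR => //; apply: addr_ge0; first exact: bigmax_ge0.
  by apply: mulr_ge0; [apply: ltW|exact: bigmax_ge0].
lra.
Qed.

Lemma Gm_unit : Gm \in unitmx.
Proof.
rewrite unitmxE unitfE -det_tr; apply/negP => /det0P [v vn0 vA].
have Au : Gm *m v^T = 0 by rewrite -(trmxK Gm) -trmx_mul vA linear0.
have := stoch_bound v^T; rewrite Au.
have -> : \big[Num.max/0]_i `|(0 : 'cV[R]_n) i 0| = 0.
  by elim/big_rec: _ => // i x _ ->; rewrite mxE normr0 maxxx.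
move=> h.
have hM : \big[Num.max/0]_i `|v^T i 0| <= 0.
  by move: h; rewrite pmulr_rle0 // subr_gt0.
move/negP: vn0; apply; apply/eqP/matrixP => i j.
rewrite (ord1 i) mxE; apply/eqP; rewrite -normr_eq0 eq_le normr_ge0 andbT.
have := le_bigmaxR (fun i => `|v^T i 0|) j; rewrite mxE => hj.
exact: le_trans hj hM.
Qed.

Lemma rowsum_inv x : \sum_y `|invmx Gm x y| <= (1 - g)^-1.
Proof.
set Gi := invmx Gm.
pose s : 'cV[R]_n := \col_y (if 0 <= Gi x y then 1 else -1).
set u := Gi *m s.
have Au : Gm *m u = s by rewrite /u mulmxA mulmxV ?mul1mx //; exact: Gm_unit.
have hs : \big[Num.max/0]_i `|s i 0| <= 1.
  apply: bigmax_leR => // i; rewrite mxE; case: ifP => _; by rewrite ?normrN normr1.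
have := stoch_bound u; rewrite Au => hb.
have ux : u x 0 = \sum_y `|Gi x y|.
  rewrite /u mxE; apply: eq_bigr => y _; rewrite mxE.
  case: ifP => h; first by rewrite mulr1 ger0_norm.
  by rewrite mulrN1 ltr0_norm // ltNge h.
have hu : `|u x 0| <= \big[Num.max/0]_i `|u i 0|.
  exact: (le_bigmaxR (fun i => `|u i 0|)).
rewrite -ux; apply: le_trans (ler_norm _) _; apply: le_trans hu _.
have gp : 0 < 1 - g by rewrite subr_gt0.
have h1 := le_trans hb hs.
by rewrite -(ler_pM2l gp) mulfV ?gt_eqF.
Qed.

End Det.

Arguments bf {R n}. Arguments qf {R n}. Arguments Nf {R n}. Arguments Gm {R n}. Arguments rowsum_inv {R n g Q}. Arguments Gm_unit {R n g Q}.
Arguments Nf_sum {R n C}. Arguments Nf_triangle {R n C}. Arguments bf_abs {R n C}. Arguments Nf_ge0 {R n}. Arguments qf_delta {R n C}. Arguments Nf_scale {R n}.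

Lemma entry_bf (R : realType) n (C A B : 'M[R]_n) x :
  (A *m C *m B^T) x x = bf C (row x A)^T (row x B)^T.
Proof.
rewrite /bf trmxK -row_mul !mxE; apply: eq_bigr => k _; rewrite !mxE.
by congr (_ * _); rewrite !mxE.
Qed.

Section Hat.
Variables (R : realType) (n : nat) (C : 'M[R]_n) (c g : R) (P Q : 'M[R]_n).
Hypothesis Csym : C^T = C.
Hypothesis Cpsd : forall v : 'cV[R]_n, 0 <= (v^T *m C *m v) 0 0.
Hypothesis Cc : forall i, C i i <= c.
Hypothesis c0 : 0 <= c.
Hypothesis g0 : 0 < g.
Hypothesis g1 : g < 1.
Hypothesis Q0 : forall i j, 0 <= Q i j.
Hypothesis Q1 : forall i, \sum_j Q i j = 1.

Definition Dv y : 'cV[R]_n := (row y Q - row y P)^T.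
Hypothesis hD : forall y, qf C (Dv y) <= c * (1 - g) ^+ 2 / 2.

Lemma row_hat x : (row x (invmx (Gm g Q) *m (1%:M - g *: P)))^T =
  delta_mx x 0 + g *: \sum_y invmx (Gm g Q) x y *: Dv y.
Proof.
have E : invmx (Gm g Q) *m (1%:M - g *: P) = 1%:M + g *: (invmx (Gm g Q) *m (Q - P)).
  have -> : 1%:M - g *: P = Gm g Q + g *: (Q - P).
    by rewrite /Gm scalerBr addrA subrK.
  by rewrite mulmxDr mulVmx ?(Gm_unit g0 g1 Q0 Q1) // scalemxAr.
rewrite E; apply/matrixP => i j; rewrite (ord1 j) !mxE summxE.
congr (_ + _); first by rewrite eq_sym andbT.
congr (_ * _); elim/big_rec2: _ => [|y a b _ ->]; rewrite ?mxE //.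
Qed.

Lemma Nf_Dv y : Nf C (Dv y) <= (71/100) * (1 - g) * Num.sqrt c.
Proof.
have K0 : 0 <= (71/100) * (1 - g) * Num.sqrt c.
  apply: mulr_ge0; last exact: sqrtr_ge0. have : g < 1 := g1. lra.
rewrite /Nf -(ger0_norm K0) -sqrtr_sqr ler_sqrt ?sqr_ge0 //.
apply: le_trans (hD y) _.
rewrite !exprMn sqr_sqrtr //.
have : 0 <= (1 - g) ^+ 2 * c by apply: mulr_ge0 => //; exact: sqr_ge0.
lra.
Qed.

Lemma Nf_hat x : Nf C (row x (invmx (Gm g Q) *m (1%:M - g *: P)))^T <= (171/100) * Num.sqrt c.
Proof.
rewrite row_hat; apply: le_trans (Nf_triangle Csym Cpsd _ _) _.
rewrite Nf_scale (ger0_norm (ltW g0)).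
have h1 : Nf C (delta_mx x 0) <= Num.sqrt c by rewrite /Nf qf_delta ler_sqrt.
have h2 : Nf C (\sum_y invmx (Gm g Q) x y *: Dv y) <= (71/100) * Num.sqrt c.
  apply: le_trans (Nf_sum Csym Cpsd _ xpredT _) _.
  apply: (@le_trans _ _ (\sum_y `|invmx (Gm g Q) x y| * ((71/100) * (1 - g) * Num.sqrt c))).
    apply: ler_sum => y _; rewrite Nf_scale; apply: ler_wpM2l => //; exact: Nf_Dv.
  rewrite -mulr_suml.
  have hs := rowsum_inv g0 g1 Q0 Q1 x.
  have gp : 0 < 1 - g by rewrite subr_gt0.
  have sc := sqrtr_ge0 c.
  apply: (@le_trans _ _ ((1 - g)^-1 * ((71/100) * (1 - g) * Num.sqrt c))).
    by apply: ler_wpM2r => //; apply: mulr_ge0 => //; apply: mulr_ge0 => //; lra.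
  have -> : (1 - g)^-1 * ((71/100) * (1 - g) * Num.sqrt c) = (71/100) * Num.sqrt c.
    by field; rewrite gt_eqF.
  by rewrite lexx.
have sc := sqrtr_ge0 c.
have := Nf_ge0 C (\sum_y invmx (Gm g Q) x y *: Dv y).
have : g * Nf C (\sum_y invmx (Gm g Q) x y *: Dv y) <= g * ((71/100) * Num.sqrt c).
  by apply: ler_wpM2l => //; exact: ltW.
have : 0 <= (1 - g) * Num.sqrt c by apply: mulr_ge0 => //; rewrite subr_ge0 ltW.
move: h1. lra.
Qed.

End Hat.

Arguments vec_expand {R n}. Arguments Nf_delta {R n C c}. Arguments bf {R n}. Arguments qf {R n}. Arguments Nf {R n}. Arguments Dv {R n}. Arguments Ssum {R n} p {N}. Arguments Yv {R n}.

Lemma holdout_entry (R : realType) n N nh (I : {set 'I_N}) (w : {ffun 'I_N -> {ffun 'I_n -> 'I_n}}) y j :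
  (holdout_est R nh I w : 'M[R]_n) y j = nh%:R^-1 * \sum_(i in I) ((w i y == j)%:R : R).
Proof.
rewrite /holdout_est mxE summxE; congr (_ * _); apply: eq_bigr => i _.
by rewrite /sample_mx mxE.
Qed.

Lemma holdout_ge0 (R : realType) n N nh (I : {set 'I_N}) (w : {ffun 'I_N -> {ffun 'I_n -> 'I_n}}) :
  forall y j, 0 <= (holdout_est R nh I w : 'M[R]_n) y j.
Proof.
move=> y j; rewrite holdout_entry; apply: mulr_ge0; first by rewrite invr_ge0.
by apply: sumr_ge0 => i _; exact: ler0n.
Qed.

Lemma holdout_sum1 (R : realType) n N nh (I : {set 'I_N}) (w : {ffun 'I_N -> {ffun 'I_n -> 'I_n}}) :
  #|I| = nh -> (0 < nh)%N ->
  forall y, \sum_j (holdout_est R nh I w : 'M[R]_n) y j = 1.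
Proof.
move=> cI nh0 y.
under eq_bigr do rewrite holdout_entry.
rewrite -mulr_sumr exchange_big /=.
rewrite (eq_bigr (fun _ => 1)); last first.
  move=> i _; rewrite (bigD1 (w i y)) //= eqxx big1 ?addr0 // => j /negbTE.
  by rewrite eq_sym => ->.
by rewrite sumr_const cI mulVf // pnatr_eq0 -lt0n.
Qed.

Lemma Dv_Ssum (R : realType) n N nh (I : {set 'I_N}) (P : 'M[R]_n) (w : {ffun 'I_N -> {ffun 'I_n -> 'I_n}}) y :
  #|I| = nh -> (0 < nh)%N ->
  Dv P (holdout_est R nh I w) y = nh%:R^-1 *: Ssum (row y P)^T y I w.
Proof.
move=> cI nh0; apply/matrixP => i j; rewrite (ord1 j) !mxE /Ssum !summxE.
under eq_bigr do rewrite /sample_mx mxE.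
under [X in _ = _ * X]eq_bigr do rewrite /Yv !mxE eqxx andbT eq_sym.
rewrite sumrB sumr_const cI.
have nz : nh%:R != 0 :> R by rewrite pnatr_eq0 -lt0n.
have -> : P y i *+ nh = P y i * nh%:R by rewrite mulr_natr.
by field.
Qed.


Lemma qf_scale (R : realType) n (C : 'M[R]_n) a u : qf C (a *: u) = a ^+ 2 * qf C u.
Proof. by rewrite /qf bfZl bfZr mulrA expr2. Qed.

Lemma qf_c0 (R : realType) n (C : 'M[R]_n) :
  C^T = C -> (forall v : 'cV[R]_n, 0 <= (v^T *m C *m v) 0 0) ->
  (forall i, C i i <= 0) -> forall u, qf C u <= 0.
Proof.
move=> Csym Cpsd Cc u.
rewrite /qf {1}(vec_expand u) bf_suml big1 // => i _.
rewrite bfZl.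
have h := bf_abs Csym Cpsd (delta_mx i 0) u.
have h0 := Nf_delta Cc (lexx 0) i.
rewrite sqrtr0 in h0.
have h1 := Nf_ge0 C (delta_mx i 0). have h2 := Nf_ge0 C u.
have e : Nf C (delta_mx i 0) = 0 by apply/eqP; rewrite eq_le h0 h1.
rewrite e mul0r normr_le0 in h.
by rewrite (eqP h) mulr0.
Qed.


Lemma nh_pos (R : realType) n (gamma delta : R) nh (y : 'I_n) :
  0 < gamma < 1 -> 0 < delta < 1 ->
  32 * ln (4 * (n%:R) ^+ 2 / delta) / (1 - gamma) ^+ 2 <= nh%:R ->
  0 < ln (4 * (n%:R) ^+ 2 / delta) /\ (0 < nh)%N.
Proof.
move=> /andP[g0 g1] /andP[d0 d1] h.
have n1 : 1 <= n%:R :> R by rewrite ler1n; apply: leq_ltn_trans (leq0n y) (ltn_ord y).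
have Lp : 0 < ln (4 * (n%:R) ^+ 2 / delta).
  apply: ln_gt0; rewrite ltr_pdivlMr //.
  have : 1 <= (n%:R : R) ^+ 2 by rewrite expr_ge1 // (le_trans ler01 n1).
  nra.
split => //.
have gp : 0 < (1 - gamma) ^+ 2 by rewrite exprn_gt0 // subr_gt0.
have : 0 < 32 * ln (4 * (n%:R) ^+ 2 / delta) / (1 - gamma) ^+ 2.
  by apply: divr_gt0 => //; apply: mulr_gt0.
move=> hp; have := lt_le_trans hp h; by rewrite ltr0n.
Qed.

Arguments Dv {R n}. Arguments Ssum {R n} p {N}. Arguments qf {R n}.

Lemma bad_bound (R : realType) n N (P : 'M[R]_n) (I : {set 'I_N}) nh (C : 'M[R]_n)
  (c gamma delta : R) (y : 'I_n) :
  (forall i j, 0 <= P i j) -> (forall i, \sum_j P i j = 1) ->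
  C^T = C -> (forall v : 'cV[R]_n, 0 <= (v^T *m C *m v) 0 0) ->
  (forall i, C i i <= c) -> 0 <= c ->
  0 < gamma < 1 -> 0 < delta < 1 ->
  32 * ln (4 * (n%:R) ^+ 2 / delta) / (1 - gamma) ^+ 2 <= nh%:R ->
  #|I| = nh ->
  \sum_(w | c * (1 - gamma) ^+ 2 / 2 < qf C (Dv P (holdout_est R nh I w) y))
     iid_weight P w <= delta / (2 * n%:R).
Proof.
move=> P0 P1 Csym Cpsd Cc c0 hg hd hnh cI.
have [Lp nh0] := @nh_pos R n gamma delta nh y hg hd hnh.
move: (hg) (hd) => /andP[g0 g1] /andP[d0 d1].
have n1 : 1 <= n%:R :> R by rewrite ler1n; apply: leq_ltn_trans (leq0n y) (ltn_ord y).
have n0 : 0 < n%:R :> R by apply: lt_le_trans n1; exact: ltr01.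
have rhs0 : 0 <= delta / (2 * n%:R).
  by apply: divr_ge0; [exact: ltW | apply: mulr_ge0 => //; exact: ltW].
have [c_eq0|cne0] := eqVneq c 0.
  rewrite big_pred0 // => w; apply/negbTE; rewrite -leNgt c_eq0 !mul0r.
  by apply: qf_c0 => // i; rewrite -c_eq0.
have cpos : 0 < c by rewrite lt_def cne0 c0.
set p : 'cV[R]_n := (row y P)^T.
have pE z : p z 0 = P y z by rewrite !mxE.
have p0 z : 0 <= p z 0 by rewrite pE.
have p1 : \sum_z p z 0 = 1 by under eq_bigr do rewrite pE; exact: P1.
set t' := c * (1 - gamma) ^+ 2 / 2.
have nhp : 0 < nh%:R :> R by rewrite ltr0n.
rewrite (eq_bigl (fun w => t' * nh%:R ^+ 2 < qf C (Ssum p y I w))); last first.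
  move=> w; rewrite Dv_Ssum // qf_scale exprVn mulrC.
  by rewrite ltr_pdivlMr // exprn_gt0.
apply: le_trans (@tail R n C Csym Cpsd c Cc c0 p p0 p1 N P y P0 P1 pE I
   (t' * nh%:R ^+ 2) cpos _) _; first by rewrite cI.
rewrite cI.
set L := ln (4 * (n%:R) ^+ 2 / delta).
have gp : 0 < (1 - gamma) ^+ 2 by rewrite exprn_gt0 // subr_gt0.
have hx : L <= t' * nh%:R ^+ 2 / (16 * c * nh%:R).
  have -> : t' * nh%:R ^+ 2 / (16 * c * nh%:R) = (1 - gamma) ^+ 2 * nh%:R / 32.
    by rewrite /t'; field; rewrite cne0 andbT lt0r_neq0.
  move: hnh; rewrite ler_pdivrMr // => h.
  rewrite ler_pdivlMr // /L; lra.
have e1 : expR (- (t' * nh%:R ^+ 2 / (16 * c * nh%:R))) <= expR (- L).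
  by rewrite ler_expR lerN2.
have e2 : expR (- L) = delta / (4 * n%:R ^+ 2).
  rewrite expRN lnK ?invf_div //.
  rewrite posrE; apply: divr_gt0 => //; apply: mulr_gt0 => //; exact: exprn_gt0.
rewrite e2 in e1.
apply: le_trans (ler_pM (expR_ge0 _) (expR_ge0 _) (expR_half R) e1) _.
have E : delta / (2 * n%:R) - 2 * (delta / (4 * n%:R ^+ 2)) =
   delta * (n%:R - 1) / (2 * n%:R ^+ 2).
  by field; exact: lt0r_neq0.
rewrite -subr_ge0 E; apply: divr_ge0.
  by apply: mulr_ge0; [exact: ltW | rewrite subr_ge0].
by apply: mulr_ge0 => //; exact: sqr_ge0.
Qed.


Theorem lemma1 (R : realType) (n : nat) (gamma delta : R) (P : 'M[R]_n)
  (N nh : nat) (I1 I2 : {set 'I_N}) (M : 'M[R]_n) :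
  0 < gamma < 1 -> 0 < delta < 1 -> row_stochastic P ->
  32 * ln (4 * (n%:R) ^+ 2 / delta) / (1 - gamma) ^+ 2 <= nh%:R ->
  #|I1| = nh -> #|I2| = nh -> [disjoint I1 & I2] ->
  psd M ->
  1 - delta <=
  iid_prob P (fun w =>
    diagnorm (invmx (1%:M - gamma *: holdout_est R nh I1 w) *m M
              *m (invmx (1%:M - gamma *: holdout_est R nh I2 w))^T)
    <= 3 * diagnorm (invmx (1%:M - gamma *: P) *m M *m (invmx (1%:M - gamma *: P))^T)).
Proof.
move=> hg hd [P0 P1] hnh c1 c2 _ [Msym Mpsd].
move: (hg) (hd) => /andP[g0 g1] /andP[d0 d1].
set G0 := 1%:M - gamma *: P.
have G0u : G0 \in unitmx := @Gm_unit R n gamma P g0 g1 P0 P1.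
set B := invmx G0.
set C := B *m M *m B^T.
have Csym : C^T = C by rewrite /C !trmx_mul trmxK Msym mulmxA.
have Cpsd : forall v : 'cV[R]_n, 0 <= (v^T *m C *m v) 0 0.
  by move=> v; have := Mpsd (B^T *m v); rewrite /C trmx_mul trmxK !mulmxA.
set c := diagnorm C.
have Cc i : C i i <= c.
  apply: le_trans (ler_norm _) _; exact: (@le_bigmaxR R n (fun i => `|C i i|) i).
have c0 : 0 <= c by exact: bigmax_ge0.
have HM : G0 *m C *m G0^T = M.
  rewrite /C !mulmxA mulmxV // mul1mx -mulmxA -trmx_mul mulmxV //.
  by rewrite trmx1 mulmx1.
set t' := c * (1 - gamma) ^+ 2 / 2.
pose good w := [forall y, (qf C (Dv P (holdout_est R nh I1 w) y) <= t')
                      && (qf C (Dv P (holdout_est R nh I2 w) y) <= t')].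
have det w : good w ->
  diagnorm (invmx (1%:M - gamma *: holdout_est R nh I1 w) *m M
              *m (invmx (1%:M - gamma *: holdout_est R nh I2 w))^T) <= 3 * c.
  move=> /forallP gw.
  rewrite -HM.
  set Q1 := holdout_est R nh I1 w. set Q2 := holdout_est R nh I2 w.
  have -> : invmx (1%:M - gamma *: Q1) *m (G0 *m C *m G0^T) *m (invmx (1%:M - gamma *: Q2))^T
     = (invmx (Gm gamma Q1) *m G0) *m C *m (invmx (Gm gamma Q2) *m G0)^T.
    by rewrite trmx_mul !mulmxA.
  apply: bigmax_leR; first by apply: mulr_ge0.
  move=> x.
  have nh0 : (0 < nh)%N by case: (@nh_pos R n gamma delta nh x hg hd hnh).
  have Q10 := @holdout_ge0 R n N nh I1 w.
  have Q11 := @holdout_sum1 R n N nh I1 w c1 nh0.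
  have Q20 := @holdout_ge0 R n N nh I2 w.
  have Q21 := @holdout_sum1 R n N nh I2 w c2 nh0.
  have hD1 y : qf C (Dv P Q1 y) <= c * (1 - gamma) ^+ 2 / 2 by case/andP: (gw y).
  have hD2 y : qf C (Dv P Q2 y) <= c * (1 - gamma) ^+ 2 / 2 by case/andP: (gw y).
  rewrite entry_bf.
  apply: le_trans (bf_abs Csym Cpsd _ _) _.
  have N1 := @Nf_hat R n C c gamma P Q1 Csym Cpsd Cc c0 g0 g1 Q10 Q11 hD1 x.
  have N2 := @Nf_hat R n C c gamma P Q2 Csym Cpsd Cc c0 g0 g1 Q20 Q21 hD2 x.
  have a0 := Nf_ge0 C (row x (invmx (Gm gamma Q1) *m G0))^T.
  have b0 := Nf_ge0 C (row x (invmx (Gm gamma Q2) *m G0))^T.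
  have sc := sqrtr_ge0 c.
  have scc : Num.sqrt c * Num.sqrt c = c by rewrite -expr2 sqr_sqrtr.
  apply: le_trans (ler_pM a0 b0 N1 N2) _.
  have -> : 171 / 100 * Num.sqrt c * (171 / 100 * Num.sqrt c) =
      (171/100) ^+ 2 * (Num.sqrt c * Num.sqrt c) by ring.
  rewrite scc; lra.
rewrite /iid_prob.
apply: (@le_trans _ _ (\sum_(w | good w) iid_weight P w)); last first.
  rewrite [leRHS]big_mkcond [leLHS]big_mkcond /=; apply: ler_sum => w _.
  case: ifP => hgw; first by rewrite (det w hgw).
  by case: ifP => _ //; exact: (@iw_ge0 R n N P P0).
have tot := @iw_sum1 R n N P P1; rewrite (bigID good) /= in tot.
suff: \sum_(w | ~~ good w) iid_weight P w <= delta by lra.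
pose b1 y w := t' < qf C (Dv P (holdout_est R nh I1 w) y).
pose b2 y w := t' < qf C (Dv P (holdout_est R nh I2 w) y).
apply: (@le_trans _ _ (\sum_y (\sum_(w | b1 y w) iid_weight P w
                            + \sum_(w | b2 y w) iid_weight P w))).
  have E y : \sum_(w | b1 y w) iid_weight P w + \sum_(w | b2 y w) iid_weight P w
      = \sum_w iid_weight P w * ((b1 y w)%:R + (b2 y w)%:R).
    rewrite !(big_mkcond (fun w => b1 y w)) !(big_mkcond (fun w => b2 y w)) -big_split /=.
    apply: eq_bigr => w _; rewrite mulrDr.
    by case: (b1 y w); case: (b2 y w); rewrite ?mulr1 ?mulr0.
  rewrite (eq_bigr _ (fun y _ => E y)) exchange_big /= big_mkcond /=.
  apply: ler_sum => w _.
  have iw0 := @iw_ge0 R n N P P0 w.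
  have s0 : 0 <= \sum_y ((b1 y w)%:R + (b2 y w)%:R : R).
    by apply: sumr_ge0 => y _; apply: addr_ge0; exact: ler0n.
  case: ifP => hng; last by rewrite -mulr_sumr; apply: mulr_ge0.
  have [y hy] : exists y, ~~ ((qf C (Dv P (holdout_est R nh I1 w) y) <= t')
                      && (qf C (Dv P (holdout_est R nh I2 w) y) <= t')).
    by apply/forallPn.
  rewrite -mulr_sumr -[leLHS]mulr1; apply: ler_wpM2l => //.
  rewrite (bigD1 y) //=.
  have r0 : 0 <= \sum_(i | i != y) ((b1 i w)%:R + (b2 i w)%:R : R).
    by apply: sumr_ge0 => i _; apply: addr_ge0; exact: ler0n.
  have : 1 <= ((b1 y w)%:R + (b2 y w)%:R : R).
    rewrite /b1 /b2 !ltNge.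
    move: hy; rewrite negb_and.
    by case: (qf C _ <= t'); case: (qf C _ <= t') => //=; rewrite ?add0r ?addr0 ?lerDl.
  lra.
apply: (@le_trans _ _ (\sum_(y : 'I_n) (delta / (2 * n%:R) + delta / (2 * n%:R)))).
  apply: ler_sum => y _; apply: lerD.
    exact: (@bad_bound R n N P I1 nh C c gamma delta y P0 P1 Csym Cpsd Cc c0 hg hd hnh c1).
  exact: (@bad_bound R n N P I2 nh C c gamma delta y P0 P1 Csym Cpsd Cc c0 hg hd hnh c2).
rewrite sumr_const card_ord.
have [n0|npos] := posnP n.
  by rewrite n0 mulr0n; apply: ltW.
have k0 : n%:R != 0 :> R by rewrite pnatr_eq0 -lt0n.
have -> : (delta / (2 * n%:R) + delta / (2 * n%:R)) *+ n
   = (delta / (2 * n%:R) + delta / (2 * n%:R)) * n%:R by exact: esym (mulr_natr _ n).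
have -> : (delta / (2 * n%:R) + delta / (2 * n%:R)) * n%:R = delta by field.
by [].
Qed.
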